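(* Let $(\mathbb{E}_{s,t}[\cdot])_{0\le s\le t<\infty}$ be an $\mathcal{F}_t$-consistent pricing mechanism (satisfying (A1)–(A4) below). Let $0\le t_0<t_1<\cdots<t_N$ and $K_t=\sum_{i=0}^{N-1}\xi_i1_{[t_i,t_{i+1})}(t)$ with $\xi_i\in L^2(\mathcal{F}_{t_i})$. For $0\le i\le N-1$, $t_i\le s\le t\le t_{i+1}$ and $X\in L^2(\mathcal{F}_t)$, define $\mathbb{E}^i_{s,t}[X;K]:=\mathbb{E}_{s,t}[X+K_t-K_s]$. Then for each $i=0,1,\dots,N-1$, the family $(\mathbb{E}^i_{s,t}[\cdot;K])_{t_i\le s\le t\le t_{i+1}}$ is an $\mathcal{F}_t$-consistent pricing mechanism on $[t_i,t_{i+1}]$.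
   Context: $(\Omega,\mathcal{F},P)$ carries a $d$-dimensional Brownian motion $B$, $\mathcal{F}_t=\sigma\{B_s:s\le t\}$; $L^2(\mathcal{F}_t)$: real square-integrable $\mathcal{F}_t$-measurable random variables. A family of operators $\mathbb{E}_{s,t}:L^2(\mathcal{F}_t)\to L^2(\mathcal{F}_s)$, $T_0\le s\le t\le T_1$, is an $\mathcal{F}_t$-consistent pricing mechanism on $[T_0,T_1]$ if for all $T_0\le s\le t\le T_1$ and $X,X'\in L^2(\mathcal{F}_t)$: (A1) $X\ge X'$ a.s. implies $\mathbb{E}_{s,t}[X]\ge\mathbb{E}_{s,t}[X']$ a.s.; (A2) $\mathbb{E}_{t,t}[X]=X$; (A3) $\mathbb{E}_{r,s}[\mathbb{E}_{s,t}[X]]=\mathbb{E}_{r,t}[X]$ for $T_0\le r\le s$; (A4) $1_A\mathbb{E}_{s,t}[X]=1_A\mathbb{E}_{s,t}[1_AX]$ a.s. for all $A\in\mathcal{F}_s$. *)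

(* Defs.v *)
From HB Require Import structures.
From mathcomp Require Import all_boot all_order all_algebra.
From mathcomp Require Import all_classical all_reals all_analysis.
Set Implicit Arguments. Unset Strict Implicit. Unset Printing Implicit Defensive.
Import Order.TTheory GRing.Theory Num.Theory.
Import numFieldNormedType.Exports.
Local Open Scope classical_set_scope.
Local Open Scope ring_scope.

Section Defs.
Context {d : measure_display} {Omega : measurableType d} {R : realType}.

Definition meas_wrt (G : set (set Omega)) (X : Omega -> R) : Prop :=
  forall A : set R, measurable A -> G (X @^-1` A).

Definition L2 (P : probability Omega R) (G : set (set Omega)) (X : Omega -> R)
  : Prop :=
  meas_wrt G X /\ P.-integrable setT (fun w => ((X w) ^+ 2)%:E).

(* d-dimensional standard Brownian motion, given by its coordinates
   B t w i (t >= 0, i : 'I_dim); natural filtration *)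
Definition brownian_filtration (dim : nat) (B : R -> Omega -> 'I_dim -> R)
  (t : R) : set (set Omega) :=
  <<s [set A | exists s, exists i : 'I_dim, exists S : set R,
        [/\ 0 <= s <= t, measurable S & A = (fun w => B s w i) @^-1` S]] >>.

Definition brownian_motion (dim : nat) (P : probability Omega R)
  (B : R -> Omega -> 'I_dim -> R) : Prop :=
  [/\ (forall t i, 0 <= t -> measurable_fun setT (fun w => B t w i)),
      (forall w i, B 0 w i = 0),
      (forall w i, {within [set t | 0 <= t], continuous (fun t => B t w i)}) &
      (* for 0 <= s < t, B_t - B_s is independent of F_s and N(0,(t-s) I_d) *)
      (forall s t, 0 <= s -> s < t ->
         forall A, brownian_filtration B s A ->
         forall S : 'I_dim -> set R, (forall i, measurable (S i)) ->
         P (A `&` \bigcap_(i in [set: 'I_dim])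
               [set w | B t w i - B s w i \in S i]) =
         (P A * \prod_(i < dim) normal_prob 0 (Num.sqrt (t - s)) (S i))%E)].

(* F_t-consistent pricing mechanism on [T0, T1] (T1 may be +oo; when
   T1 = +oo the time range is [T0, +oo)). Operators are total functions on
   random variables; only their behaviour on L^2 is constrained. *)
Definition consistent_pm (P : probability Omega R) (F : R -> set (set Omega))
  (E : R -> R -> (Omega -> R) -> (Omega -> R)) (T0 : R) (T1 : \bar R) : Prop :=
  forall s t, T0 <= s -> s <= t -> (t%:E <= T1)%E ->
  [/\ (forall X, L2 P (F t) X -> L2 P (F s) (E s t X)),
      (forall X X', L2 P (F t) X -> L2 P (F t) X' ->
         {ae P, forall w, X' w <= X w} ->
         {ae P, forall w, E s t X' w <= E s t X w}),
      (forall X, L2 P (F t) X -> {ae P, forall w, E t t X w = X w}),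
      (forall r X, T0 <= r -> r <= s -> L2 P (F t) X ->
         {ae P, forall w, E r s (E s t X) w = E r t X w}) &
      (forall A X, F s A -> L2 P (F t) X ->
         {ae P, forall w, \1_A w * E s t X w
                          = \1_A w * E s t (fun w' => \1_A w' * X w') w})].

Definition step_process (N : nat) (tt : nat -> R) (xi : nat -> Omega -> R)
  (t : R) (w : Omega) : R :=
  \sum_(i < N) xi i w * \1_(`[tt i, tt i.+1[ : set R) t.

Definition E_with_K (E : R -> R -> (Omega -> R) -> (Omega -> R))
  (K : R -> Omega -> R) (s t : R) (X : Omega -> R) : Omega -> R :=
  E s t (fun w => X w + K t w - K s w).

End Defs.

(* Main.v *)
Require Import Defs.
From HB Require Import structures.
From mathcomp Require Import all_boot all_order all_algebra.
From mathcomp Require Import all_classical all_reals all_analysis.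
From mathcomp Require Import ring lra measurable_realfun.
Import Order.TTheory GRing.Theory Num.Theory.
Local Open Scope classical_set_scope.
Local Open Scope ring_scope.

Lemma meas_wrtE (d : measure_display) (Omega : measurableType d) (R : realType)
  (C : set (set Omega)) (X : Omega -> R) :
  meas_wrt <<s C >> X <-> measurable_fun setT (X : g_sigma_algebraType C -> R).
Proof.
split.
- by move=> h _ A mA; rewrite setTI; exact: h.
- by move=> h A mA; have := h measurableT A mA; rewrite setTI.
Qed.

Lemma L2_comb (d : measure_display) (Omega : measurableType d) (R : realType)
  (P : probability Omega R) (C : set (set Omega)) (X Y Z : Omega -> R) :
  C `<=` measurable ->
  L2 P <<s C >> X -> L2 P <<s C >> Y -> meas_wrt <<s C >> Z ->
  (forall w, Z w ^+ 2 <= 2 * (X w ^+ 2 + Y w ^+ 2)) ->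
  L2 P <<s C >> Z.
Proof.
move=> Cm [_ iX] [_ iY] mZ hb; split => //.
have mZO : measurable_fun setT Z.
  move=> _ A mA; rewrite setTI; apply: (smallest_sub (@sigma_algebra_measurable _ Omega) Cm).
  exact: mZ.
have hg : P.-integrable setT (fun w => (2:R)%:E * ((X w ^+ 2)%:E + (Y w ^+ 2)%:E))%E.
  exact: (integrableZl measurableT 2 (integrableD measurableT iX iY)).
apply: (le_integrable measurableT _ _ hg).
- by apply/measurable_realfun.measurable_EFinP; apply: measurable_funX.
- move=> w _; rewrite -EFinD -EFinM !abse_EFin lee_fin ger0_norm ?sqr_ge0 //.
  by rewrite ger0_norm //; apply: mulr_ge0 => //; apply: addr_ge0; apply: sqr_ge0.
Qed.

Lemma L2_0 (d : measure_display) (Omega : measurableType d) (R : realType)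
  (P : probability Omega R) (G : set (set Omega)) :
  sigma_algebra setT G -> L2 P G (fun _ => 0).
Proof.
move=> sG; split.
- move=> A mA; have [A0|nA0] := pselect (A 0).
  + have -> : (fun _ : Omega => (0:R)) @^-1` A = setT by apply/seteqP; split.
    by case: sG => h0 hC _; have := hC set0 h0; rewrite setD0.
  + have -> : (fun _ : Omega => (0:R)) @^-1` A = set0 by apply/seteqP; split.
    by case: sG.
- have -> : (fun w : Omega => ((0:R) ^+ 2)%:E) = cst 0%E.
    by apply/funext => w; rewrite expr0n.
  exact: integrable0.
Qed.

Lemma L2_mono (d : measure_display) (Omega : measurableType d) (R : realType)
  (P : probability Omega R) (G G' : set (set Omega)) X :
  G `<=` G' -> L2 P G X -> L2 P G' X.
Proof. by move=> GG' [m i]; split => // A mA; apply: GG'; apply: m. Qed.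

Lemma L2_add (d : measure_display) (Omega : measurableType d) (R : realType)
  (P : probability Omega R) (C : set (set Omega)) (X Y : Omega -> R) :
  C `<=` measurable ->
  L2 P <<s C >> X -> L2 P <<s C >> Y -> L2 P <<s C >> (fun w => X w + Y w).
Proof.
move=> Cm hX hY; apply: (@L2_comb _ _ _ P C X Y (fun w => X w + Y w) Cm hX hY).
- apply/meas_wrtE; apply: measurable_funD; apply/meas_wrtE.
  by case: hX. by case: hY.
- move=> w; have := sqr_ge0 (X w - Y w); rewrite !expr2; nra.
Qed.

Lemma L2_sub (d : measure_display) (Omega : measurableType d) (R : realType)
  (P : probability Omega R) (C : set (set Omega)) (X Y : Omega -> R) :
  C `<=` measurable ->
  L2 P <<s C >> X -> L2 P <<s C >> Y -> L2 P <<s C >> (fun w => X w - Y w).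
Proof.
move=> Cm hX hY; apply: (@L2_comb _ _ _ P C X Y (fun w => X w - Y w) Cm hX hY).
- apply/meas_wrtE; apply: measurable_funB; apply/meas_wrtE.
  by case: hX. by case: hY.
- move=> w; have := sqr_ge0 (X w + Y w); rewrite !expr2; nra.
Qed.

Lemma L2_indicM (d : measure_display) (Omega : measurableType d) (R : realType)
  (P : probability Omega R) (C : set (set Omega)) (A : set Omega) (X : Omega -> R) :
  C `<=` measurable -> <<s C >> A ->
  L2 P <<s C >> X -> L2 P <<s C >> (fun w => \1_A w * X w).
Proof.
move=> Cm mA hX.
have h0 : L2 P <<s C >> (fun _ => 0) by apply: L2_0; exact: smallest_sigma_algebra.
apply: (@L2_comb _ _ _ P C X _ (fun w => \1_A w * X w) Cm hX h0).
- apply/meas_wrtE; apply: measurable_funM; last by apply/meas_wrtE; case: hX.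
  exact: (@measurable_indic _ (g_sigma_algebraType C)).
- move=> w; rewrite indicE; case: (w \in A) => /=; rewrite !expr2; nra.
Qed.

Lemma F_mono (d : measure_display) (Omega : measurableType d) (R : realType)
  (dim : nat) (B : R -> Omega -> 'I_dim -> R) (s t : R) :
  s <= t -> brownian_filtration B s `<=` brownian_filtration B t.
Proof.
move=> st; apply: sub_sigma_algebra2 => A [u [i [S [/andP[h0 h1] mS ->]]]].
exists u, i, S; split => //; apply/andP; split => //; exact: le_trans st.
Qed.

Lemma F_gen_meas (d : measure_display) (Omega : measurableType d) (R : realType)
  (P : probability Omega R) (dim : nat) (B : R -> Omega -> 'I_dim -> R) (t : R) :
  brownian_motion P B ->
  [set A | exists s, exists i : 'I_dim, exists S : set R,
        [/\ 0 <= s <= t, measurable S & A = (fun w => B s w i) @^-1` S]]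
  `<=` measurable.
Proof.
case=> hm _ _ _ A [u [i [S [/andP[h0 h1] mS ->]]]].
by have := hm u i h0 measurableT S mS; rewrite setTI.
Qed.

Lemma ae_congr (d : measure_display) (Omega : measurableType d) (R : realType)
  (P : probability Omega R) (G G' : set (set Omega))
  (f : (Omega -> R) -> (Omega -> R)) (Y1 Y2 : Omega -> R) :
  (forall X X', L2 P G X -> L2 P G X' ->
         {ae P, forall w, X' w <= X w} ->
         {ae P, forall w, f X' w <= f X w}) ->
  L2 P G Y1 -> L2 P G Y2 -> {ae P, forall w, Y1 w = Y2 w} ->
  {ae P, forall w, f Y1 w = f Y2 w}.
Proof.
move=> hA1 h1 h2 he.
have a1 : {ae P, forall w, f Y2 w <= f Y1 w}.
  by apply: hA1 => //; apply: filterS he => w ->.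
have a2 : {ae P, forall w, f Y1 w <= f Y2 w}.
  by apply: hA1 => //; apply: filterS he => w ->.
apply: filterS2 a1 a2 => w ha hb; apply/le_anti; by rewrite ha hb.
Qed.

Lemma tt_le (R : realType) (N : nat) (tt : nat -> R) :
  (forall i, (i < N)%N -> tt i < tt i.+1) ->
  forall m n, (m <= n)%N -> (n <= N)%N -> tt m <= tt n.
Proof.
move=> hinc m; elim=> [|n IH] hmn hn.
  by rewrite leqn0 in hmn; rewrite (eqP hmn).
rewrite leq_eqVlt in hmn; case/orP: hmn => [/eqP -> //|hmn].
apply: le_trans (IH hmn (ltnW hn)) _; exact/ltW/hinc.
Qed.

Lemma indic_itv (R : realType) (a b t : R) :
  \1_(`[a, b[ : set R) t = if (a <= t) && (t < b) then 1 else 0 :> R.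
Proof.
rewrite indicE; case: ifP => h.
  by rewrite mem_set //= in_itv /= h.
by rewrite memNset //= in_itv /= h.
Qed.

Lemma K_at (d : measure_display) (Omega : measurableType d) (R : realType)
  (N : nat) (tt : nat -> R) (xi : nat -> Omega -> R) (j : nat) (t : R) :
  (forall i, (i < N)%N -> tt i < tt i.+1) -> (j < N)%N ->
  tt j <= t -> t < tt j.+1 -> step_process N tt xi t = xi j.
Proof.
move=> hinc jN h1 h2; apply/funext => w; rewrite /step_process.
rewrite (bigD1 (Ordinal jN)) //= big1 => [|k hk].
  by rewrite indic_itv h1 h2 /= mulr1 addr0.
rewrite indic_itv; case: ifP; last by rewrite mulr0.
case/andP => k1 k2; exfalso.
have kN := ltn_ord k.
have hkj : (val k != j) by apply: contra hk => /eqP e; apply/eqP/val_inj.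
case: (ltngtP k j) hkj => // hk' _.
- have := @tt_le _ _ _ hinc _ _ hk' (ltnW jN); lra.
- have := @tt_le _ _ _ hinc _ _ hk' (ltnW kN); lra.
Qed.

Lemma K_end (d : measure_display) (Omega : measurableType d) (R : realType)
  (N : nat) (tt : nat -> R) (xi : nat -> Omega -> R) (t : R) :
  (forall i, (i < N)%N -> tt i < tt i.+1) ->
  tt N <= t -> step_process N tt xi t = (fun _ => 0).
Proof.
move=> hinc h; apply/funext => w; rewrite /step_process big1 // => k _.
rewrite indic_itv; case: ifP; last by rewrite mulr0.
case/andP => k1 k2; exfalso.
have := @tt_le _ _ _ hinc _ _ (ltn_ord k) (leqnn N); lra.
Qed.

Arguments K_at {d Omega R N tt} xi {j t}.
Arguments K_end {d Omega R N tt} xi {t}.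

Arguments F_mono {d Omega R dim} B {s t}.
Arguments L2_mono {d Omega R P G G' X}.
Arguments ae_congr {d Omega R P G G' f Y1 Y2}.

Theorem lemma6p1 (d : measure_display) (Omega : measurableType d)
  (R : realType) (P : probability Omega R) (dim : nat)
  (B : R -> Omega -> 'I_dim -> R)
  (E : R -> R -> (Omega -> R) -> (Omega -> R))
  (N : nat) (tt : nat -> R) (xi : nat -> Omega -> R) :
  (0 < dim)%N ->
  brownian_motion P B ->
  consistent_pm P (brownian_filtration B) E 0 +oo%E ->
  0 <= tt 0%N ->
  (forall i, (i < N)%N -> tt i < tt i.+1) ->
  (forall i, (i < N)%N -> L2 P (brownian_filtration B (tt i)) (xi i)) ->
  forall i, (i < N)%N ->
    consistent_pm P (brownian_filtration B)
      (E_with_K E (step_process N tt xi)) (tt i) (tt i.+1)%:E.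
Proof.
move=> dimpos BM HE h0 hinc hxi i iN.
set F := brownian_filtration B.
set K := step_process N tt xi.
have tti0 : 0 <= tt i := le_trans h0 (@tt_le _ _ _ hinc _ _ (leq0n i) (ltnW iN)).
have ttii : tt i < tt i.+1 := hinc i iN.
have LA : forall u X Y, L2 P (F u) X -> L2 P (F u) Y ->
    L2 P (F u) (fun w => X w + Y w).
  by move=> u X Y; apply: L2_add; exact: (@F_gen_meas _ _ _ P dim B u BM).
have LS : forall u X Y, L2 P (F u) X -> L2 P (F u) Y ->
    L2 P (F u) (fun w => X w - Y w).
  by move=> u X Y; apply: L2_sub; exact: (@F_gen_meas _ _ _ P dim B u BM).
have LI : forall u A X, F u A -> L2 P (F u) X ->
    L2 P (F u) (fun w => \1_A w * X w).
  by move=> u A X; apply: L2_indicM; exact: (@F_gen_meas _ _ _ P dim B u BM).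
have KL2 : forall u v, tt i <= u -> u <= v -> v <= tt i.+1 -> L2 P (F v) (K u).
  move=> u v h1 h2 h3.
  have [hu|hu] := ltP u (tt i.+1).
    rewrite /K (K_at xi hinc iN h1 hu).
    exact: (L2_mono (F_mono B (le_trans h1 h2)) (hxi i iN)).
  have eu : u = tt i.+1 by apply/le_anti; rewrite hu (le_trans h2 h3).
  apply: (L2_mono (F_mono B h2)).
  have [iN'|iN'] := ltnP i.+1 N.
    rewrite eu /K (K_at xi hinc iN' (lexx _) (hinc _ iN')).
    exact: hxi.
  have eN : i.+1 = N by apply/eqP; rewrite eqn_leq iN iN'.
  rewrite eu /K (K_end xi hinc); last by rewrite eN.
  apply: L2_0; exact: smallest_sigma_algebra.
have LY : forall u v X, tt i <= u -> u <= v -> v <= tt i.+1 -> L2 P (F v) X ->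
    L2 P (F v) (fun w => X w + K v w - K u w).
  move=> u v X h1 h2 h3 hX; apply: LS; last exact: KL2.
  apply: LA => //; apply: KL2 => //; exact: le_trans h2.
have Kc : forall u v, tt i <= u -> u <= v -> v < tt i.+1 -> K u = K v.
  move=> u v h1 h2 h3; rewrite /K (K_at xi hinc iN h1 (le_lt_trans h2 h3)).
  by rewrite (K_at xi hinc iN (le_trans h1 h2) h3).
move=> s t hs hst ht.
have ht' : t <= tt i.+1 by rewrite lee_fin in ht.
have s0 : 0 <= s := le_trans tti0 hs.
have [hL hA1 hA2 hA3 hA4] := HE s t s0 hst (leey _).
split.
- by move=> X hX; apply: hL; apply: LY.
- move=> X X' hX hX' hle; rewrite /E_with_K; apply: hA1; try exact: LY.
  by apply: filterS hle => w h; lra.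
- move=> X hX; rewrite /E_with_K.
  have -> : (fun w => X w + K t w - K t w) = X by apply/funext => w; rewrite addrK.
  have [_ _ hA2' _ _] := HE t t (le_trans s0 hst) (lexx _) (leey _).
  exact: hA2'.
- move=> r X hr hrs hX; rewrite /E_with_K.
  have r0 : 0 <= r := le_trans tti0 hr.
  have [hLr hA1r _ _ _] := HE r s r0 hrs (leey _).
  have [hss|hss] := ltP s (tt i.+1).
    have ers := Kc r s hr hrs hss.
    rewrite -ers.
    have -> : (fun w => E s t (fun w0 => X w0 + K t w0 - K r w0) w + K r w - K r w)
        = E s t (fun w0 => X w0 + K t w0 - K r w0) by apply/funext => w; rewrite addrK.
    apply: hA3 => //; apply: LY => //; exact: le_trans hst.
  have es : s = tt i.+1 by apply/le_anti; rewrite hss (le_trans hst ht').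
  have et : t = s by apply/le_anti; rewrite hst es ht'.
  subst t.
  have -> : (fun w => X w + K s w - K s w) = X by apply/funext => w; rewrite addrK.
  apply: (@ae_congr _ _ _ P (F s) (F s) _ _ _ hA1r).
  + apply: LY => //; exact: hL.
  + exact: LY.
  + by apply: filterS (hA2 X hX) => w ->.
- move=> A X hA hX; rewrite /E_with_K.
  have hAt : F t A := F_mono B hst A hA.
  have h1 := hA4 A _ hA (LY s t X hs hst ht' hX).
  have h2 := hA4 A _ hA (LY s t _ hs hst ht' (LI t A X hAt hX)).
  apply: filterS2 h1 h2 => w -> ->.
  congr (_ * E s t _ w); apply/funext => w'.
  by rewrite indicE; case: (w' \in A); rewrite /= ?mul1r ?mul0r.
Qed.
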